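(* Let $G$ and $H$ be symmetric convex $N$-player games. Then for every player $i\in A$, $$R_i(G+H)\ge R_i(G)+R_i(H).$$
   Context: Let $A=\{1,\dots,N\}$ be a finite set of players. A game is any function $G:2^A\to\mathbb{R}$; sums of games are taken pointwise. A game $G$ is symmetric convex if there is a function $g:\{0,1,\dots,N\}\to\mathbb{R}$ with $G(S)=g(|S|)$ for all $S\subseteq A$, such that the increments $g(k+1)-g(k)$ are nonnegative for all $0\le k<N$ and nondecreasing in $k$. For a player $i$ and a coalition $S\subseteq A\setminus\{i\}$, the marginal contribution is $d_iG(S)=G(S\cup\{i\})-G(S)$. Let $f_i$ be a random subset of $A\setminus\{i\}$ with distribution $\Pr\{f_i=S\}=\frac{|S|!\,(N-|S|-1)!}{N!}$ for each $S\subseteq A\setminus\{i\}$. The Shapley uncertainty of $G$ for player $i$ is $R_i(G)=\mathrm{Var}[d_iG(f_i)]$. *)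

(* Defs.v *)
From mathcomp Require Import all_boot all_order all_algebra.
Set Implicit Arguments. Unset Strict Implicit. Unset Printing Implicit Defensive.
Import Order.TTheory GRing.Theory Num.Theory.
Local Open Scope ring_scope.

(* Players are A = 'I_N (i.e. {0,...,N-1}, a relabelling of {1,...,N}).
   A game is a real-valued function on coalitions {set 'I_N}. *)
Definition game (R : realFieldType) (N : nat) := {set 'I_N} -> R.

Definition game_add (R : realFieldType) (N : nat) (G H : game R N) : game R N :=
  fun S => G S + H S.

Definition symmetric_convex (R : realFieldType) (N : nat) (G : game R N) : Prop :=
  exists g : nat -> R,
    (forall S : {set 'I_N}, G S = g #|S|) /\
    (forall k : nat, (k < N)%N -> 0 <= g k.+1 - g k) /\
    (forall k : nat, (k.+1 < N)%N -> g k.+1 - g k <= g k.+2 - g k.+1).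

Definition marginal (R : realFieldType) (N : nat) (G : game R N) (i : 'I_N)
  (S : {set 'I_N}) : R := G (i |: S) - G S.

Definition shapley_prob (R : realFieldType) (N : nat) (S : {set 'I_N}) : R :=
  ((#|S|)`! * (N - #|S| - 1)`!)%:R / (N`!)%:R.

Definition shapley_expect (R : realFieldType) (N : nat) (i : 'I_N)
  (X : {set 'I_N} -> R) : R :=
  \sum_(S : {set 'I_N} | i \notin S) @shapley_prob R N S * X S.

Definition shapley_uncertainty (R : realFieldType) (N : nat) (G : game R N)
  (i : 'I_N) : R :=
  let m := shapley_expect i (marginal G i) in
  shapley_expect i (fun S => (marginal G i S - m) ^+ 2).

(* Main.v *)
Require Import Defs.
From mathcomp Require Import all_boot all_order all_algebra.
Import Order.TTheory GRing.Theory Num.Theory.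
From mathcomp Require Import ring lra zify.
Local Open Scope ring_scope.


Lemma cov_ge0 (R : realFieldType) (T : finType) (P : pred T) (p X Y : T -> R) :
  (forall t, P t -> 0 <= p t) -> \sum_(t | P t) p t = 1 ->
  (forall s t, P s -> P t -> 0 <= (X s - X t) * (Y s - Y t)) ->
  0 <= \sum_(t | P t) p t * ((X t - \sum_(u | P u) p u * X u) *
                            (Y t - \sum_(u | P u) p u * Y u)).
Proof.
move=> p0 W1 com.
set a := \sum_(u | P u) p u * X u; set b := \sum_(u | P u) p u * Y u.
set Q := \sum_(t | P t) _.
have hX : forall s, X s - a = \sum_(t | P t) p t * (X s - X t).
  move=> s; rewrite (eq_bigr (fun t => p t * X s - p t * X t)); last first.
    by move=> t _; rewrite mulrBr.
  by rewrite sumrB -mulr_suml W1 mul1r.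
have EQ : Q = \sum_(s | P s) \sum_(t | P t) p s * p t * ((X s - X t) * (Y s - b)).
  rewrite /Q; apply: eq_bigr => s _; rewrite hX mulr_suml mulr_sumr.
  by apply: eq_bigr => t _; rewrite !mulrA.
have EQ2 : Q = \sum_(s | P s) \sum_(t | P t) p t * p s * ((X t - X s) * (Y t - b)).
  by rewrite EQ exchange_big.
have : Q + Q = \sum_(s | P s) \sum_(t | P t) p s * p t * ((X s - X t) * (Y s - Y t)).
  rewrite {1}EQ EQ2 -big_split; apply: eq_bigr => s _; rewrite -big_split.
  by apply: eq_bigr => t _ /=; rewrite [p t * p s]mulrC; ring.
have -> : Q + Q = Q *+ 2 by rewrite mulr2n.
move=> h; have : 0 <= Q *+ 2.
  rewrite h; apply: sumr_ge0 => s Ps; apply: sumr_ge0 => t Pt.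
  by rewrite mulr_ge0 ?com // mulr_ge0 ?p0.
by rewrite pmulrn_lge0.
Qed.

Lemma card_lt (n : nat) (i : 'I_n.+1) (S : {set 'I_n.+1}) : i \notin S -> (#|S| <= n)%N.
Proof.
move=> iS; have : S \subset [set~ i].
  by rewrite subsetC sub1set inE.
by move/subset_leq_card; rewrite cardsC1 card_ord.
Qed.

Lemma sum_prob1 (R : realFieldType) (n : nat) (i : 'I_n.+1) :
  \sum_(S : {set 'I_n.+1} | i \notin S) @shapley_prob R n.+1 S = 1.
Proof.
rewrite /shapley_prob -mulr_suml -natr_sum.
suff -> : (\sum_(S : {set 'I_n.+1} | i \notin S) (#|S|`! * (n.+1 - #|S| - 1)`!))%N = n.+1`!.
  by rewrite divff // pnatr_eq0 -lt0n fact_gt0.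
rewrite (partition_big (fun S : {set 'I_n.+1} => (inord #|S| : 'I_n.+1)) predT) //=.
rewrite (eq_bigr (fun k : 'I_n.+1 => 'C(n, k) * (k`! * (n - k)`!)))%N; last first.
  move=> k _.
  rewrite (eq_bigr (fun _ => k`! * (n - k)`!))%N; last first.
    move=> S /andP [iS /eqP <-]; rewrite inordK; last by rewrite ltnS (@card_lt _ _ _ iS).
    by have -> : (n.+1 - #|S| - 1 = n - #|S|)%N by lia.
  rewrite (eq_bigl (fun S => S \in [set T : {set _} | T \subset [set~ i] & #|T| == k])); last first.
    move=> S; rewrite inE subsetC sub1set inE.
    case: (boolP (i \in S)) => //= iS.
    apply/eqP/eqP => [<-|E]; first by rewrite inordK // ltnS (@card_lt _ _ _ iS).
    by apply: val_inj; rewrite /= inordK ?E // ltnS (@card_lt _ _ _ iS).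
  by rewrite sum_nat_const cards_draws cardsC1 card_ord.
rewrite (eq_bigr (fun _ => n`!)); last by move=> k _; rewrite bin_fact // -ltnS.
by rewrite sum_nat_const card_ord factS.
Qed.

Lemma incr_mono (R : realFieldType) (N : nat) (g : nat -> R) :
  (forall k : nat, (k.+1 < N)%N -> g k.+1 - g k <= g k.+2 - g k.+1) ->
  forall k l, (k <= l)%N -> (l < N)%N -> g k.+1 - g k <= g l.+1 - g l.
Proof.
move=> hg k; elim=> [|l IH] kl lN.
  by have -> : k = 0%N by lia.
case: (ltngtP k l.+1) kl => // [kl _|-> _]; last by [].
apply: le_trans (hg l lN); apply: IH; lia.
Qed.

Lemma marg_eq (R : realFieldType) (n : nat) (G : game R n.+1) (g : nat -> R) (i : 'I_n.+1) (S : {set 'I_n.+1}) :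
  (forall S : {set 'I_n.+1}, G S = g #|S|) -> i \notin S ->
  marginal G i S = g #|S|.+1 - g #|S|.
Proof. by move=> hG iS; rewrite /marginal !hG cardsU1 iS. Qed.

Theorem mainTheorem8 (R : realFieldType) (N : nat) (G H : game R N) :
  symmetric_convex G -> symmetric_convex H ->
  forall i : 'I_N,
    shapley_uncertainty (game_add G H) i >=
      shapley_uncertainty G i + shapley_uncertainty H i.
Proof.
case: N G H => [|n] G H; first by move=> _ _ [].
move=> [g [hG [_ hg]]] [h [hH [_ hh]]] i.
rewrite /shapley_uncertainty /shapley_expect.
set a := \sum_(S : {set _} | i \notin S) _ * marginal G i S.
set b := \sum_(S : {set _} | i \notin S) _ * marginal H i S.
have mA : forall S, marginal (game_add G H) i S = marginal G i S + marginal H i S.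
  by move=> S; rewrite /marginal /game_add opprD addrACA.
have -> : \sum_(S : {set _} | i \notin S) @shapley_prob R n.+1 S * marginal (game_add G H) i S = a + b.
  by rewrite /a /b -big_split; apply: eq_bigr => S _; rewrite mA mulrDr.
have Q0 := @cov_ge0 R _ (fun S : {set _} => i \notin S) (@shapley_prob R n.+1)
  (marginal G i) (marginal H i).
have E : \sum_(S : {set _} | i \notin S) @shapley_prob R n.+1 S * (marginal (game_add G H) i S - (a + b)) ^+ 2 =
  \sum_(S : {set _} | i \notin S) @shapley_prob R n.+1 S * (marginal G i S - a) ^+ 2 +
  \sum_(S : {set _} | i \notin S) @shapley_prob R n.+1 S * (marginal H i S - b) ^+ 2 +
  2 * \sum_(S : {set _} | i \notin S) @shapley_prob R n.+1 S * ((marginal G i S - a) * (marginal H i S - b)).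
  clearbody a b; rewrite mulr_sumr -!big_split; apply: eq_bigr => S _ /=; rewrite mA; ring.
rewrite E; suff : 0 <= \sum_(S : {set _} | i \notin S) @shapley_prob R n.+1 S * ((marginal G i S - a) * (marginal H i S - b)).
  lra.
apply: Q0.
- move=> S _; rewrite /shapley_prob divr_ge0 // ler0n.
- exact: sum_prob1.
move=> s t /= hs ht.
rewrite (@marg_eq _ _ _ _ _ _ hG hs) (@marg_eq _ _ _ _ _ _ hG ht) (@marg_eq _ _ _ _ _ _ hH hs) (@marg_eq _ _ _ _ _ _ hH ht).
have cs := @card_lt _ _ _ hs; have ct := @card_lt _ _ _ ht.
case: (leqP #|s| #|t|) => st.
  by apply: mulr_le0; rewrite subr_le0;
    [apply: (@incr_mono _ n.+1 _ hg) | apply: (@incr_mono _ n.+1 _ hh)].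
by apply: mulr_ge0; rewrite subr_ge0;
  [apply: (@incr_mono _ n.+1 _ hg) | apply: (@incr_mono _ n.+1 _ hh)]; rewrite ?ltnS // ltnW.
Qed.
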